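(* Let $\mathcal A$ be a finite set, $\pi^{\mathrm{ref}}\in\Delta(\mathcal A)$ with full support, $\eta>0$, and let $Q^{(1)},Q^{(2)},\dots\in\mathbb R^{\mathcal A}$ satisfy $\|Q^{(t)}\|_\infty\le1$. Set $f^{(t)}(\pi)=\langle\pi,Q^{(t)}\rangle-\eta^{-1}\mathrm{KL}(\pi\|\pi^{\mathrm{ref}})$. Define $\pi^{(1)}=\pi^{\mathrm{ref}}$ and, for $t\ge1$, $$\pi^{(t+1)}(a)\propto\big(\pi^{\mathrm{ref}}(a)\big)^{1/t}\big(\pi^{(t)}(a)\big)^{(t-1)/t}\exp\!\big(\tfrac{\eta}{t}Q^{(t)}(a)\big).$$ Then for every $T\ge1$, $$\max_{\pi\in\Delta(\mathcal A)}\frac1T\sum_{t=1}^Tf^{(t)}(\pi)-\frac1T\sum_{t=1}^Tf^{(t)}(\pi^{(t)})\le\mathcal O\!\left(\frac{\eta(1+\log T)}{T}\right).$$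
   Context: $\mathrm{KL}(p\|q)=\sum_a p(a)\log(p(a)/q(a))$; $\langle\cdot,\cdot\rangle$ is the standard inner product on $\mathbb R^{\mathcal A}$; $\mathcal O$ hides an absolute constant. *)

(* Defs.v *)
From HB Require Import structures.
From mathcomp Require Import all_boot all_order all_algebra.
From mathcomp Require Import all_classical all_reals all_analysis.
Set Implicit Arguments. Unset Strict Implicit. Unset Printing Implicit Defensive.
Import Order.TTheory GRing.Theory Num.Theory.
Local Open Scope ring_scope.

Section Defs.
Variables (R : realType) (A : finType).

Definition in_simplex (p : A -> R) : Prop :=
  (forall a, 0 <= p a) /\ \sum_(a : A) p a = 1.

Definition inner (p q : A -> R) : R := \sum_(a : A) p a * q a.

Definition KL (p q : A -> R) : R :=
  \sum_(a : A) (if p a == 0 then 0 else p a * ln (p a / q a)).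

Definition reg_obj (eta : R) (piref Qt pi : A -> R) : R :=
  inner pi Qt - eta^-1 * KL pi piref.

Definition mwu_step (eta : R) (piref : A -> R) (t : nat) (Qt pit : A -> R)
  : A -> R :=
  let w := fun a => powR (piref a) (t%:R^-1) *
                    powR (pit a) ((t%:R - 1) / t%:R) *
                    expR (eta / t%:R * Qt a) in
  fun a => w a / \sum_(b : A) w b.

(* pi_iter n = pi^(n+1); so pi^(t) = pi_iter (t.-1) for t >= 1 *)
Fixpoint pi_iter (eta : R) (piref : A -> R) (Q : nat -> A -> R) (n : nat)
  : A -> R :=
  match n with
  | 0 => piref
  | n'.+1 => mwu_step eta piref n'.+1 (Q n'.+1) (pi_iter eta piref Q n')
  end.

End Defs.

(* Main.v *)
Require Import Defs.
From HB Require Import structures.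
From mathcomp Require Import all_boot all_order all_algebra.
From mathcomp Require Import all_classical all_reals all_analysis.
From mathcomp Require Import ring lra.
Import Order.TTheory GRing.Theory Num.Theory.
Local Open Scope ring_scope.

Section Proof.
Variables (R : realType) (A : finType) (piref : A -> R) (eta : R) (Q : nat -> A -> R).
Hypothesis hsimp : in_simplex piref.
Hypothesis hpos : forall a, 0 < piref a.
Hypothesis heta : 0 < eta.
Hypothesis hQ : forall t, (1 <= t)%N -> forall a, `|Q t a| <= 1.

Definition Zs (h : A -> R) := \sum_(b : A) piref b * expR (h b).
Definition gibbs (h : A -> R) : A -> R := fun a => piref a * expR (h a) / Zs h.

Lemma ex_a : exists a : A, true.
Proof.
case: hsimp => _ hs.
case: (pickP (@predT A)) => [a _|h0]; first by exists a.
by move: hs; rewrite big_pred0 // => /eqP; rewrite eq_sym oner_eq0.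
Qed.

Lemma Zs_gt0 h : 0 < Zs h.
Proof.
have [a _] := ex_a.
rewrite /Zs (bigD1 a) //=.
apply: (@lt_le_trans _ _ (piref a * expR (h a))).
  by apply: mulr_gt0 => //; exact: expR_gt0.
rewrite lerDl; apply: sumr_ge0 => b _.
by apply: mulr_ge0; [exact: ltW | exact: ltW (expR_gt0 _)].
Qed.

Lemma gibbs_gt0 h a : 0 < gibbs h a.
Proof.
by rewrite /gibbs; apply: divr_gt0; [apply: mulr_gt0 => //; exact: expR_gt0|exact: Zs_gt0].
Qed.

Lemma gibbs_sum h : \sum_a gibbs h a = 1.
Proof.
rewrite /gibbs -big_distrl /= -/(Zs h) divff //.
by apply: lt0r_neq0; exact: Zs_gt0.
Qed.

Lemma gibbs_simplex h : in_simplex (gibbs h).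
Proof. by split; [move=> a; exact: ltW (gibbs_gt0 h a)| exact: gibbs_sum]. Qed.

Lemma ln_gibbs h a : ln (gibbs h a) = ln (piref a) + h a - ln (Zs h).
Proof.
rewrite /gibbs ln_div ?lnM ?expRK //; rewrite ?posrE ?expR_gt0 ?Zs_gt0 //.
by apply: mulr_gt0 => //; exact: expR_gt0.
Qed.

Lemma gibbs0 : gibbs (fun=> 0) = piref.
Proof.
apply: funext => a; rewrite /gibbs /Zs.
under eq_bigr do rewrite expR0 mulr1.
by case: hsimp => _ ->; rewrite expR0 mulr1 divr1.
Qed.

Lemma KL_gibbs h : KL (gibbs h) piref = inner (gibbs h) h - ln (Zs h).
Proof.
rewrite /KL /inner.
have -> : ln (Zs h) = \sum_a gibbs h a * ln (Zs h) by rewrite -big_distrl /= gibbs_sum mul1r.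
rewrite -sumrB; apply: eq_bigr => a _.
rewrite (negbTE (lt0r_neq0 (gibbs_gt0 h a))) ln_div ?posrE ?gibbs_gt0 ?hpos // ln_gibbs.
by rewrite -mulrBr; congr (_ * _); ring.
Qed.

Lemma gibbs_ineq h pi : in_simplex pi ->
  inner pi h - KL pi piref <= inner (gibbs h) h - KL (gibbs h) piref.
Proof.
case=> pi0 pi1.
rewrite KL_gibbs opprB addrCA subrr addr0.
have -> : ln (Zs h) = \sum_a pi a * ln (Zs h) by rewrite -big_distrl /= pi1 mul1r.
rewrite /inner /KL -subr_ge0 -!sumrB.
have H : \sum_a (pi a - gibbs h a) <= 
   \sum_a ((if pi a == 0 then 0 else pi a * ln (pi a / piref a)) - pi a * h a + pi a * ln (Zs h)).
  apply: ler_sum => a _.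
  have [->|pa] := eqVneq (pi a) 0.
    by rewrite !mul0r subr0 addr0 add0r oppr_le0 ltW // gibbs_gt0.
  have pa0 : 0 < pi a by rewrite lt_def pa pi0.
  have ga := gibbs_gt0 h a.
  have Hl : ln (gibbs h a / pi a) <= gibbs h a / pi a - 1.
    have := @le_ln1Dx R (gibbs h a / pi a - 1).
    rewrite [1 + _]addrC subrK; apply.
    have : 0 < gibbs h a / pi a by apply: divr_gt0.
    lra.
  rewrite ln_div ?posrE // in Hl.
  rewrite ln_gibbs in Hl.
  have Hm : pi a * (ln (piref a) + h a - ln (Zs h) - ln (pi a)) <= gibbs h a - pi a.
    apply: le_trans (ler_wpM2l (ltW pa0) Hl) _.
    rewrite le_eqVlt; apply/orP; left; apply/eqP; field.
    exact: lt0r_neq0.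
  rewrite ln_div ?posrE ?hpos //.
  have -> : pi a * (ln (pi a) - ln (piref a)) - pi a * h a + pi a * ln (Zs h)
     = - (pi a * (ln (piref a) + h a - ln (Zs h) - ln (pi a))) by ring.
  have -> : pi a - gibbs h a = - (gibbs h a - pi a) by ring.
  by rewrite lerN2.
rewrite sumrB pi1 gibbs_sum subrr in H.
by apply: (le_trans H); rewrite le_eqVlt; apply/orP; left; apply/eqP; apply: eq_bigr => a _; ring.
Qed.

Definition S (n : nat) (a : A) : R := \sum_(1 <= s < n.+1) Q s a.
Definition hh (n : nat) (a : A) : R := eta / n%:R * S n a.

Lemma S0 a : S 0 a = 0.
Proof. by rewrite /S big_geq. Qed.

Lemma SS n a : S n.+1 a = S n a + Q n.+1 a.
Proof. by rewrite /S big_nat_recr. Qed.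

Lemma hh_rec n a : (n%:R / n.+1%:R) * hh n a + eta / n.+1%:R * Q n.+1 a = hh n.+1 a.
Proof.
rewrite /hh SS.
case: n => [|n]; first by rewrite S0; ring.
field; apply/andP; split; apply: lt0r_neq0; have := ler0n R n; lra.
Qed.

Lemma pi_iter_gibbs n : pi_iter eta piref Q n = gibbs (hh n).
Proof.
elim: n => [|n IH].
  by rewrite /= -gibbs0; congr gibbs; apply: funext => a; rewrite /hh S0 mulr0.
rewrite /= IH /mwu_step.
set t : R := n.+1%:R.
have tn : t - 1 = n%:R by rewrite /t mulrSr addrK.
have t0 : t != 0 by rewrite /t pnatr_eq0.
set c := expR (- (n%:R / t * ln (Zs (hh n)))).
have Hw : forall a, powR (piref a) t^-1 * powR (gibbs (hh n) a) ((t - 1) / t) *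
     expR (eta / t * Q n.+1 a) = c * (piref a * expR (hh n.+1 a)).
  move=> a.
  rewrite /powR (gt_eqF (hpos a)) (gt_eqF (gibbs_gt0 _ a)) ln_gibbs tn.
  have -> : piref a * expR (hh n.+1 a) = expR (ln (piref a) + hh n.+1 a).
    by rewrite expRD lnK // posrE.
  rewrite /c -!expRD; congr expR.
  rewrite -hh_rec; field; apply: lt0r_neq0; have := ler0n R n; lra.
apply: funext => a.
under eq_bigr do rewrite Hw.
rewrite Hw -big_distrr /= /gibbs.
rewrite -/(Zs _) invfM mulrACA mulfV ?mul1r //.
by rewrite /c gt_eqF ?expR_gt0.
Qed.

Definition P n := pi_iter eta piref Q n.
Definition f t pi := reg_obj eta piref (Q t) pi.
Arguments P : simpl never.
Arguments f : simpl never.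

Lemma P_simplex n : in_simplex (P n).
Proof. rewrite /P pi_iter_gibbs; exact: gibbs_simplex. Qed.

Lemma inner_S n pi : inner pi (S n.+1) = inner pi (S n) + inner pi (Q n.+1).
Proof. by rewrite /inner -big_split /=; apply: eq_bigr => a _; rewrite SS mulrDr. Qed.

Lemma inner0 (pi : A -> R) : inner pi (fun=> 0) = 0.
Proof. by rewrite /inner big1 // => a _; rewrite mulr0. Qed.

Lemma sum_reg n pi : \sum_(1 <= s < n.+1) f s pi = inner pi (S n) - n%:R * eta^-1 * KL pi piref.
Proof.
elim: n => [|n IH].
  rewrite big_geq // (_ : inner pi (S 0) = 0); first by rewrite !mul0r subr0.
  by rewrite /inner big1 // => a _; rewrite S0 mulr0.
rewrite big_nat_recr //= IH inner_S /f /reg_obj mulrSr; ring.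
Qed.

Lemma GM n pi : in_simplex pi ->
  \sum_(1 <= s < n.+1) f s pi <= \sum_(1 <= s < n.+1) f s (gibbs (hh n)).
Proof.
move=> hp.
case: n => [|m]; first by rewrite !big_geq.
have E x : inner x (S m.+1) = m.+1%:R / eta * inner x (hh m.+1).
  rewrite /inner /hh big_distrr /=; apply: eq_bigr => a _.
  field; apply/andP; split; apply: lt0r_neq0 => //; have := ler0n R m; lra.
rewrite !(sum_reg m.+1) !E.
have H := ler_wpM2l (_ : 0 <= m.+1%:R / eta) (gibbs_ineq (hh m.+1) pi hp).
by move: H; rewrite !mulrBr; apply; apply: divr_ge0 => //; exact: ltW.
Qed.

Lemma BTL T : \sum_(1 <= s < T.+1) f s (P T) <= \sum_(1 <= t < T.+1) f t (P t).
Proof.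
elim: T => [|T IH]; first by rewrite !big_geq.
rewrite big_nat_recr //= [X in _ <= X]big_nat_recr //= lerD2r.
apply: le_trans IH.
rewrite {2}/P pi_iter_gibbs; exact: GM (P_simplex _).
Qed.

Lemma KL_ref : KL piref piref = 0.
Proof.
rewrite /KL big1 // => a _.
by rewrite (gt_eqF (hpos a)) divff ?ln1 ?mulr0 // gt_eqF.
Qed.

Lemma KL_ge0 pi : in_simplex pi -> 0 <= KL pi piref.
Proof.
move=> hp; have := gibbs_ineq (fun=> 0) pi hp.
by rewrite gibbs0 KL_ref !inner0 subr0 sub0r oppr_le0.
Qed.

Lemma regret1 T pi : in_simplex pi ->
  \sum_(1 <= t < T.+1) f t pi - \sum_(1 <= t < T.+1) f t (P t.-1) <=
  \sum_(1 <= t < T.+1) (f t (P t) - f t (P t.-1)).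
Proof.
move=> hp; rewrite [X in _ <= X]sumrB lerD2r.
apply: le_trans (BTL T).
rewrite /P pi_iter_gibbs -/(P T); exact: GM.
Qed.

Lemma tele T : \sum_(1 <= t < T.+1) (f t (P t) - f t (P t.-1)) =
  \sum_(1 <= t < T.+1) (inner (P t) (Q t) - inner (P t.-1) (Q t)) - eta^-1 * KL (P T) piref.
Proof.
elim: T => [|T IH].
  by rewrite !big_geq // /P /= KL_ref mulr0 subr0.
rewrite big_nat_recr //= IH [X in _ = X - _]big_nat_recr //= /f /reg_obj; ring.
Qed.

Lemma gibbs_ratio h h' d : (forall a, `|h' a - h a| <= d) ->
  forall a, gibbs h' a <= expR (d + d) * gibbs h a.
Proof.
move=> H a.
have Zl : expR (- d) * Zs h <= Zs h'.
  rewrite /Zs big_distrr /=; apply: ler_sum => b _.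
  rewrite mulrCA -expRD; apply: ler_wpM2l; first exact: ltW.
  rewrite ler_expR; have := H b; rewrite ler_norml => /andP[h1 h2]; lra.
have Z0 := Zs_gt0 h; have Z0' := Zs_gt0 h'.
have e0 : 0 < expR (- d) * Zs h by apply: mulr_gt0 => //; exact: expR_gt0.
apply: (@le_trans _ _ ((piref a * expR (h a + d)) / (expR (- d) * Zs h))).
  rewrite /gibbs; apply: ler_pM.
  - by apply: mulr_ge0; [exact: ltW|exact: ltW (expR_gt0 _)].
  - by rewrite invr_ge0 ltW.
  - apply: ler_wpM2l; first exact: ltW.
    rewrite ler_expR; have := H a; rewrite ler_norml => /andP[h1 h2]; lra.
  - by rewrite lef_pV2 ?posrE.
rewrite /gibbs !expRD expRN le_eqVlt; apply/orP; left; apply/eqP.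
field; apply/andP; split; [exact: lt0r_neq0 | exact: lt0r_neq0 (expR_gt0 _)].
Qed.

Lemma l1_2 h h' : \sum_a `|gibbs h' a - gibbs h a| <= 2.
Proof.
have -> : (2 : R) = \sum_a (gibbs h' a + gibbs h a) by rewrite big_split /= !gibbs_sum.
apply: ler_sum => a _; apply: (le_trans (ler_normB _ _)).
by rewrite !ger0_norm // ltW // gibbs_gt0.
Qed.

Lemma l1_exp h h' d : (forall a, `|h' a - h a| <= d) ->
  \sum_a `|gibbs h' a - gibbs h a| <= 2 * (expR (d + d) - 1).
Proof.
move=> H.
have H' : forall a, `|h a - h' a| <= d by move=> a; rewrite distrC.
set E := expR (d + d).
have d0 : 0 <= d by have [a _] := ex_a; exact: le_trans (normr_ge0 _) (H a).
have E1 : 1 <= E by rewrite /E -expR0 ler_expR; lra.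
have -> : 2 * (E - 1) = \sum_a (E - 1) * (gibbs h' a + gibbs h a).
  by rewrite -big_distrr big_split /= !gibbs_sum mulrC.
apply: ler_sum => a _.
have r1 := @gibbs_ratio h h' d H a; have r2 := @gibbs_ratio h' h d H' a.
have g1 := gibbs_gt0 h a; have g2 := gibbs_gt0 h' a.
rewrite -/E in r1 r2.
rewrite ler_norml; apply/andP; split; nra.
Qed.

Lemma normS n a : `|S n a| <= n%:R.
Proof.
rewrite /S; apply: (le_trans (ler_norm_sum _ _ _)).
apply: (@le_trans _ _ (\sum_(1 <= s < n.+1) (1 : R))).
  by apply: ler_sum_nat => i /andP[i1 _]; exact: hQ.
by rewrite sumr_const_nat subSS subn0.
Qed.

Lemma hh_diff n a : `|hh n.+1 a - hh n a| <= 2 * eta / n.+1%:R.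
Proof.
have q := hQ _ (ltn0Sn n) a.
have t0 : 0 < n.+1%:R :> R by rewrite ltr0n.
case: n q t0 => [|n] q t0.
  rewrite /hh S0 mulr0 subr0 /S big_nat1 divr1 normrM (gtr0_norm heta).
  apply: (@le_trans _ _ eta); first by rewrite ler_piMr // ltW.
  rewrite (_ : (0.+1%:R : R) = 1) // divr1. have := heta. lra.
have n0 : 0 < n.+1%:R :> R by rewrite ltr0n.
have -> : hh n.+2 a - hh n.+1 a = eta / n.+2%:R * Q n.+2 a - eta / (n.+1%:R * n.+2%:R) * S n.+1 a.
  rewrite /hh SS; field; apply/andP; split; apply: lt0r_neq0 => //.
apply: (le_trans (ler_normB _ _)).
have c1 : 0 <= eta / n.+2%:R by apply: divr_ge0; exact: ltW.
have c2 : 0 <= eta / (n.+1%:R * n.+2%:R).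
  by apply: divr_ge0; [exact: ltW| apply: mulr_ge0; exact: ltW].
rewrite (normrM (eta / n.+2%:R)) (normrM (eta / (_ * _))) (ger0_norm c1) (ger0_norm c2).
have s := normS n.+1 a.
have e1 : eta / n.+2%:R * `|Q n.+2 a| <= eta / n.+2%:R.
  by rewrite ler_piMr // divr_ge0 // ltW.
have e2 : eta / (n.+1%:R * n.+2%:R) * `|S n.+1 a| <= eta / n.+2%:R.
  apply: (@le_trans _ _ (eta / (n.+1%:R * n.+2%:R) * n.+1%:R)).
    by apply: ler_wpM2l.
  rewrite le_eqVlt; apply/orP; left; apply/eqP; field.
  by apply/andP; split; apply: lt0r_neq0.
apply: le_trans (lerD e1 e2) _.
rewrite le_eqVlt; apply/orP; left; apply/eqP; field; exact: lt0r_neq0.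
Qed.

Lemma inner_diff (x y : A -> R) t : (1 <= t)%N ->
  inner x (Q t) - inner y (Q t) <= \sum_a `|x a - y a|.
Proof.
move=> ht; rewrite /inner -sumrB; apply: ler_sum => a _.
rewrite -mulrBl; apply: (le_trans (ler_norm _)); rewrite normrM.
by apply: ler_piMr; [exact: normr_ge0 | exact: hQ].
Qed.

Lemma expbound (u D : R) : 0 <= u -> D <= 2 -> D <= 2 * (expR u - 1) ->
  D <= 2 * expR 1 * u.
Proof.
move=> u0 D2 De.
have e1 : 2 <= expR (1 : R) by have := @expR_ge1Dx R 1; lra.
have [u1|u1] := leP u 1.
  have h1 := @expR_ge1Dx R (- u).
  rewrite expRN in h1.
  have eu := expR_gt0 u.
  have h2 : expR u - u * expR u <= 1.
    have := ler_wpM2l (ltW eu) h1; rewrite mulfV ?gt_eqF //; lra.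
  have h3 : expR u <= expR 1 by rewrite ler_expR.
  have h4 : u * expR u <= u * expR 1 by apply: ler_wpM2l.
  nra.
nra.
Qed.

Lemma step_bound n : \sum_a `|P n.+1 a - P n a| <= 8 * expR 1 * eta / n.+1%:R.
Proof.
rewrite /P !pi_iter_gibbs.
have t0 : 0 < n.+1%:R :> R by rewrite ltr0n.
set d := 2 * eta / n.+1%:R.
have d0 : 0 <= d by rewrite /d; apply: divr_ge0 => //; apply: mulr_ge0 => //; exact: ltW.
have := @l1_exp (hh n) (hh n.+1) _ (@hh_diff n).
rewrite -/d => H1.
have dd : 0 <= d + d by rewrite addr_ge0.
have := @expbound (d + d) _ dd (l1_2 (hh n) (hh n.+1)) H1.
move=> H; apply: le_trans H _; rewrite le_eqVlt; apply/orP; left; apply/eqP.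
rewrite /d; field; exact: lt0r_neq0.
Qed.

Lemma harm T : (1 <= T)%N -> \sum_(1 <= t < T.+1) (t%:R : R)^-1 <= 1 + ln (T%:R : R).
Proof.
case: T => [//|T] _.
elim: T => [|T IH].
  by rewrite big_nat1 invr1 ln1 addr0.
rewrite big_nat_recr //=.
have t0 : 0 < T.+1%:R :> R by rewrite ltr0n.
have t1 : 0 < T.+2%:R :> R by rewrite ltr0n.
suff : ln (T.+1%:R : R) + T.+2%:R^-1 <= ln T.+2%:R.
  move=> h; apply: (@le_trans _ _ (1 + ln (T.+1%:R : R) + T.+2%:R^-1)); first by rewrite lerD2r.
  by rewrite -addrA lerD2l.
have := @le_ln1Dx R (- T.+2%:R^-1).
have -> : 1 - T.+2%:R^-1 = T.+1%:R / T.+2%:R :> R.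
  by rewrite [T.+2]lock /= -lock; field; exact: lt0r_neq0.
rewrite ln_div ?posrE //.
move=> h; have : -1 < - T.+2%:R^-1 :> R.
  rewrite ltrN2 invf_lt1 //; by rewrite ltr1n.
have key : forall a b c : R, a - b <= - c -> a + c <= b by move=> a b c; lra.
by move/h; apply: key.
Qed.

Lemma regret_bound T pi : (1 <= T)%N -> in_simplex pi ->
  \sum_(1 <= t < T.+1) f t pi - \sum_(1 <= t < T.+1) f t (P t.-1) <=
  8 * expR 1 * eta * (1 + ln (T%:R : R)).
Proof.
move=> hT hp.
apply: le_trans (@regret1 T pi hp) _.
rewrite tele.
have K := @KL_ge0 (P T) (P_simplex T).
apply: (@le_trans _ _ (\sum_(1 <= t < T.+1) (inner (P t) (Q t) - inner (P t.-1) (Q t)))).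
  rewrite gerBl; apply: mulr_ge0 => //; rewrite invr_ge0; exact: ltW.
apply: (@le_trans _ _ (\sum_(1 <= t < T.+1) (8 * expR 1 * eta) * (t%:R)^-1)).
  apply: ler_sum_nat => t /andP[t1 _].
  case: t t1 => [//|t] t1 /=.
  apply: le_trans (@inner_diff _ _ _ t1) _.
  exact: step_bound.
rewrite -big_distrr /=; apply: ler_wpM2l; last exact: harm.
apply: mulr_ge0; last exact: ltW.
apply: mulr_ge0 => //; exact: ltW (expR_gt0 _).
Qed.

End Proof.

Theorem mainTheorem8 (R : realType) :
  exists C : R, 0 < C /\
  forall (A : finType) (piref : A -> R) (eta : R) (Q : nat -> A -> R),
    in_simplex piref ->
    (forall a, 0 < piref a) ->
    0 < eta ->
    (forall t, (1 <= t)%N -> forall a, `|Q t a| <= 1) ->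
    forall T : nat, (1 <= T)%N ->
    forall pi : A -> R, in_simplex pi ->
      T%:R^-1 * \sum_(1 <= t < T.+1) reg_obj eta piref (Q t) pi
      - T%:R^-1 * \sum_(1 <= t < T.+1)
                    reg_obj eta piref (Q t) (pi_iter eta piref Q t.-1)
      <= C * (eta * (1 + ln (T%:R : R)) / T%:R).
Proof.
exists (8 * expR 1); split.
  by apply: mulr_gt0 => //; exact: expR_gt0.
move=> A piref eta Q hs hpos heta hQ T hT pi hp.
have H : \sum_(1 <= t < T.+1) reg_obj eta piref (Q t) pi
      - \sum_(1 <= t < T.+1) reg_obj eta piref (Q t) (pi_iter eta piref Q t.-1)
      <= 8 * expR 1 * eta * (1 + ln (T%:R : R)).
  exact: (@regret_bound R A piref eta Q hs hpos heta hQ T pi hT hp).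
have T0 : 0 < T%:R :> R by rewrite ltr0n.
rewrite -mulrBr.
have -> : 8 * expR 1 * (eta * (1 + ln (T%:R : R)) / T%:R)
   = T%:R^-1 * (8 * expR 1 * eta * (1 + ln (T%:R : R))) by ring.
by apply: ler_wpM2l => //; rewrite invr_ge0 ltW.
Qed.
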